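(* Let $\varphi$ be a profile over a finite set $N$ that is qualifying consecutive (QC) with respect to a linear order $\rhd$ of $N$. Then the individuals in $f^{\mathrm{CSR}}(\varphi,N)$ are consecutive in $\rhd$ (i.e., $f^{\mathrm{CSR}}(\varphi,N)$ is an interval of $\rhd$, possibly empty).
   Context: A profile over a finite set $N$ of individuals is a map $\varphi:N\times N\to\{0,1\}$; $\varphi(a,a')=1$ means $a$ qualifies $a'$. For a linear order $\rhd=(a_1,\dots,a_n)$ of $N$, $\varphi$ is QC with respect to $\rhd$ if for every $a\in N$ the set $\{a_x:\varphi(a,a_x)=1\}$ is a set of consecutive elements of $\rhd$ (all 1s in the vector $(\varphi(a,a_1),\dots,\varphi(a,a_n))$ are consecutive). Consensus-start-respecting rule: for $T\subseteq N$, let $K_0(\varphi,T)=\{a\in T:\varphi(a',a)=1\text{ for all }a'\in T\}$ and for $\ell\ge1$, $K_\ell(\varphi,T)=K_{\ell-1}(\varphi,T)\cup\{a\in T:\exists a'\in K_{\ell-1}(\varphi,T),\ \varphi(a',a)=1\}$; $f^{\mathrm{CSR}}(\varphi,T)$ is the limit (stable value) of this sequence. *)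

(* Defs.v *)
From mathcomp Require Import all_boot.
Set Implicit Arguments. Unset Strict Implicit. Unset Printing Implicit Defensive.

Definition profile (N : finType) := N -> N -> bool.

(* A linear order of N, given as the list (a_1,...,a_n) enumerating N
   without repetition. *)
Definition linear_order (N : finType) (s : seq N) : Prop :=
  uniq s /\ forall a : N, a \in s.

Definition consecutive (N : finType) (s : seq N) (S : N -> Prop) : Prop :=
  forall (x0 : N) (i j k : nat), i <= j -> j <= k -> k < size s ->
    S (nth x0 s i) -> S (nth x0 s k) -> S (nth x0 s j).

(* QC: for every a, the set of individuals qualified by a is consecutive. *)
Definition QC (N : finType) (phi : profile N) (s : seq N) : Prop :=
  forall a : N, consecutive s (fun x => phi a x).

Fixpoint CSR_K (N : finType) (phi : profile N) (T : {set N}) (l : nat) : {set N} :=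
  match l with
  | 0 => [set a in T | [forall a', (a' \in T) ==> phi a' a]]
  | l'.+1 => CSR_K phi T l' :|:
             [set a in T | [exists a', (a' \in CSR_K phi T l') && phi a' a]]
  end.

(* f^CSR(phi, T): the limit of the increasing sequence K_l, i.e. its union. *)
Definition f_CSR (N : finType) (phi : profile N) (T : {set N}) : N -> Prop :=
  fun a => exists l : nat, a \in CSR_K phi T l.

(* Main.v *)
Require Import Defs.
From mathcomp Require Import all_boot.


Section S.
Variables (N : finType) (phi : profile N) (s : seq N).
Local Notation K := (CSR_K phi [set: N]).

Lemma K0P b : b \in K 0 -> forall a, phi a b.
Proof. by rewrite inE => /andP[_ /forallP H] a; move: (H a); rewrite inE. Qed.

Lemma K0I b : (forall a, phi a b) -> b \in K 0.
Proof. by move=> H; rewrite /= inE in_setT /=; apply/forallP => a; rewrite in_setT H. Qed.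

Lemma KS l b : b \in K l.+1 -> b \in K l \/ exists2 a, a \in K l & phi a b.
Proof.
rewrite /= inE => /orP[H|]; first by left.
by rewrite inE => /andP[_ /existsP[a /andP[H1 H2]]]; right; exists a.
Qed.

Lemma KSI l b a : a \in K l -> phi a b -> b \in K l.+1.
Proof. by move=> H1 H2; rewrite /= inE; apply/orP; right; rewrite inE in_setT /=; apply/existsP; exists a; rewrite H1. Qed.

Lemma Kmono l m : l <= m -> {subset K l <= K m}.
Proof.
elim: m => [|m IH]; first by rewrite leqn0 => /eqP->.
rewrite leq_eqVlt => /orP[/eqP->//|H] b Hb.
by rewrite /= inE (IH H b Hb).
Qed.

Lemma Kne l b : b \in K l -> exists x, x \in K 0.
Proof.
elim: l b => [|l IH] b; first by exists b.
by case/KS => [H|[a H _]]; [apply: (IH b)|apply: (IH a)].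
Qed.

Hypothesis qc : QC phi s.

Lemma Pl l d i j k : i <= j -> j <= k -> k < size s ->
  nth d s i \in K l -> nth d s k \in K l ->
  (nth d s i \in K 0 \/ nth d s k \in K 0) -> nth d s j \in K l.
Proof.
move=> hij hjk hk; elim: l => [|l IH] Hi Hk H0.
  apply: K0I => a; have := qc a d i j k hij hjk hk; apply; exact: K0P.
case: H0 => H0.
- have Hi' : nth d s i \in K l by apply: (Kmono _ _ (leq0n l)).
  case/KS: Hk => [Hk|[a Ha Hpa]].
    by apply: (Kmono _ _ (leqnSn l)); apply: IH => //; left.
  apply: (KSI _ _ _ Ha); apply: (qc a d i j k hij hjk hk) => //; exact: K0P.
- have Hk' : nth d s k \in K l by apply: (Kmono _ _ (leq0n l)).
  case/KS: Hi => [Hi|[a Ha Hpa]].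
    by apply: (Kmono _ _ (leqnSn l)); apply: IH => //; right.
  apply: (KSI _ _ _ Ha); apply: (qc a d i j k hij hjk hk) => //; exact: K0P.
Qed.
End S.

Theorem lemma2 (N : finType) (phi : profile N) (s : seq N) :
  linear_order s -> QC phi s -> consecutive s (f_CSR phi [set: N]).
Proof.
move=> [us alls] qc d i j k hij hjk hk [l1 H1] [l2 H2].
have Hi : nth d s i \in CSR_K phi [set: N] (l1 + l2) by apply: (Kmono _ _ _ _ (leq_addr l2 l1)).
have Hk : nth d s k \in CSR_K phi [set: N] (l1 + l2) by apply: (Kmono _ _ _ _ (leq_addl l1 l2)).
have [x Hx] := Kne _ _ _ _ H1.
have xs := alls x.
set p := index x s.
have hp : p < size s by rewrite index_mem.
have np : nth d s p = x by rewrite nth_index.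
have HxL : x \in CSR_K phi [set: N] (l1 + l2) by apply: (Kmono _ _ _ _ (leq0n _)).
exists (l1 + l2).
case: (leqP j p) => hjp.
- apply: (Pl _ _ _ qc _ _ _ _ _ hij hjp hp) => //; rewrite np //; by right.
- apply: (Pl _ _ _ qc _ _ _ _ _ (ltnW hjp) hjk hk) => //; rewrite np //; by left.
Qed.
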